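(* Let $\vec{\alpha}=\langle\alpha_s:s\in[\mathbb{N}]^{<\infty}\rangle$ be a sequence of nonstandard hypernatural numbers and let $n\in\mathbb{N}$. For every $A\subseteq[\mathbb{N}]^n$ and every $\vec{\alpha}$-tree $T$ there exists an $\vec{\alpha}$-tree $S\subseteq T$ with $st(S)=st(T)$ such that either $S(n)\subseteq A$ or $S(n)\cap A=\emptyset$.
   Context: Setting (Alpha-Theory of Benci–Di Nasso): ZFC together with a new symbol $\alpha$ satisfying: ($\alpha$1) every sequence $\varphi=\langle\varphi_i:i\in\mathbb{N}\rangle$ has a unique ideal value $\varphi[\alpha]$; ($\alpha$2) if $\varphi[\alpha]=\psi[\alpha]$ and $f\circ\varphi$, $f\circ\psi$ make sense then $(f\circ\varphi)[\alpha]=(f\circ\psi)[\alpha]$; ($\alpha$3) constant real sequences $r$ have ideal value $r$, and $\langle i\rangle$ has ideal value $\alpha\notin\mathbb{N}$; ($\alpha$4) if $\vartheta_i=\{\varphi_i,\psi_i\}$ then $\vartheta[\alpha]=\{\varphi[\alpha],\psi[\alpha]\}$; ($\alpha$5) the constant sequence $\emptyset$ has ideal value $\emptyset$, and for nonempty $\psi_i$, $\psi[\alpha]=\{\vartheta[\alpha]:\vartheta_i\in\psi_i\ \forall i\}$. ${}^*A$ is the ideal value of the constant sequence $A$; elements of ${}^*\mathbb{N}\setminus\mathbb{N}$ are nonstandard hypernatural numbers. $[X]^n$, $[X]^{<\infty}$, $[X]^\infty$: $n$-element, finite, infinite subsets of $X\subseteq\mathbb{N}$. For finite $s$, $s\sqsubseteq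 X$ means $s=\{j\in X:j\le i\}$ for some $i$. A tree on $\mathbb{N}$ is a nonempty $T\subseteq[\mathbb{N}]^{<\infty}$ closed under $\sqsubseteq$-initial segments; $T(n)=\{s\in T:|s|=n\}$; stem $st(T)$ = $\sqsubseteq$-maximal $s\in T$ comparable with all elements of $T$; $T/s=\{t\in T:s\sqsubseteq t\}$. An $\vec{\alpha}$-tree is a tree $T$ with a stem, $T/st(T)\neq\emptyset$, and $s\cup\{\alpha_s\}\in{}^*T$ for all $s\in T/st(T)$. *)

(* Defs.v *)
From HB Require Import structures.
From mathcomp Require Import all_boot finmap.
Set Implicit Arguments. Unset Strict Implicit. Unset Printing Implicit Defensive.
Local Open Scope fset_scope.

Definition init_seg (s X : {fset nat}) : Prop :=
  exists i : nat, s = [fset j in X | j < i].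

Definition is_tree (T : {fset nat} -> Prop) : Prop :=
  (exists t, T t) /\ (forall s t, T t -> init_seg s t -> T s).

Definition comparable_all (T : {fset nat} -> Prop) (s : {fset nat}) : Prop :=
  forall t, T t -> init_seg s t \/ init_seg t s.

Definition is_stem (T : {fset nat} -> Prop) (s : {fset nat}) : Prop :=
  [/\ T s, comparable_all T s &
      forall s', T s' -> comparable_all T s' -> init_seg s s' -> s' = s].

Definition nonprincipal_ultrafilter (U : (nat -> Prop) -> Prop) : Prop :=
  [/\ U (fun _ => True) /\ ~ U (fun _ => False),
      (forall P Q : nat -> Prop, U P -> (forall i, P i -> Q i) -> U Q),
      (forall P Q : nat -> Prop, U P -> U Q -> U (fun i => P i /\ Q i)),
      (forall P : nat -> Prop, U P \/ U (fun i => ~ P i)) &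
      (forall m : nat, ~ U (fun i => i = m))].

(* the hypernatural [f]_U is nonstandard *)
Definition nonstandard (U : (nat -> Prop) -> Prop) (f : nat -> nat) : Prop :=
  forall m : nat, ~ U (fun i => f i = m).

(* the ideal value of phi belongs to *T  (Łoś) *)
Definition star_mem (U : (nat -> Prop) -> Prop) (phi : nat -> {fset nat})
  (T : {fset nat} -> Prop) : Prop := U (fun i => T (phi i)).

(* alpha-tree, where alpha_s is the hypernatural [alpha s]_U *)
Definition alpha_tree (U : (nat -> Prop) -> Prop) (alpha : {fset nat} -> nat -> nat)
  (T : {fset nat} -> Prop) : Prop :=
  is_tree T /\
  exists r, [/\ is_stem T r, (exists t, T t /\ init_seg r t) &
    forall s, T s -> init_seg r s ->
      star_mem U (fun i => s `|` [fset alpha s i]) T].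

(* Main.v *)
Require Import Defs.
From mathcomp Require Import all_boot finmap.
From Stdlib Require Import Classical.
Local Open Scope fset_scope.
Set Implicit Arguments.
Lemma seq_bound (s : seq nat) : exists b, forall j, j \in s -> j < b.
Proof.
elim: s => [|x s [b Hb]]; first by exists 0.
exists (maxn x.+1 b) => j; rewrite inE => /orP [/eqP->|/Hb]; rewrite leq_max.
  by rewrite ltnSn.
by move=> ->; rewrite orbT.
Qed.

Lemma fset_bound (t : {fset nat}) : exists b, forall j, j \in t -> j < b.
Proof. by have [b Hb] := seq_bound t; exists b => j Hj; apply: Hb. Qed.

Lemma init_seg_sub p t : init_seg p t -> p `<=` t.
Proof. by move=> [i ->]; apply/fsubsetP => x; rewrite !inE => /andP[]. Qed.

Lemma init_seg_refl t : init_seg t t.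
Proof.
have [b Hb] := fset_bound t; exists b; apply/fsetP => x; rewrite !inE.
by case Hx: (x \in t) => //=; rewrite Hb.
Qed.

Lemma init_seg_trans p s t : init_seg p s -> init_seg s t -> init_seg p t.
Proof.
move=> [i ->] [i' ->]; exists (minn i i'); apply/fsetP => x; rewrite !inE leq_min.
by case: (x \in t); case: (x < i); case: (x < i').
Qed.

Lemma sub_card_eq (p r : {fset nat}) : p `<=` r -> #|` r| <= #|` p| -> p = r.
Proof. by move=> H1 H2; apply/eqP; rewrite eqEfcard H1 H2. Qed.

Lemma init_seg_chain p q r : init_seg p r -> init_seg q r -> #|` p| = #|` q| -> p = q.
Proof.
move=> [i ->] [i' ->] Hc.
have [le|le] := leqP i i'.
  apply: sub_card_eq; last by rewrite Hc.
  apply/fsubsetP => x; rewrite !inE => /andP[-> H] /=; exact: leq_trans H le.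
apply/esym; apply: sub_card_eq; last by rewrite Hc.
apply/fsubsetP => x; rewrite !inE => /andP[-> H] /=; exact: ltn_trans H le.
Qed.

Lemma card_child (s : {fset nat}) a : a \notin s -> #|` s `|` [fset a]| = (#|` s|).+1.
Proof. by move=> H; rewrite fsetUC cardfsU1 H. Qed.

Lemma init_seg_child p s a : (forall j, j \in s -> j < a) ->
  init_seg p (s `|` [fset a]) -> p = s `|` [fset a] \/ init_seg p s.
Proof.
move=> Hs [i ->].
have [lt|le] := ltnP a i.
  left; apply/fsetP => x; rewrite !inE.
  case Hx: (x \in s) => /=.
    by rewrite (ltn_trans (Hs x Hx) lt).
  by case: eqP => // ->; rewrite lt.
right; exists i; apply/fsetP => x; rewrite !inE.
case: eqP => [->|_]; last by rewrite orbF.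
rewrite orbT /=; case Ha: (a \in s); first by have := Hs a Ha; rewrite ltnn.
by rewrite /= ltnNge le.
Qed.

Lemma init_seg_parent s a : (forall j, j \in s -> j < a) -> init_seg s (s `|` [fset a]).
Proof.
move=> Hs; exists a; apply/fsetP => x; rewrite !inE.
case Hx: (x \in s) => /=; first by rewrite Hs.
by case: eqP => [->|]; rewrite ?ltnn.
Qed.
Unset Implicit Arguments.

Section UF.
Variable U : (nat -> Prop) -> Prop.
Hypothesis HU : nonprincipal_ultrafilter U.

Lemma U_mono {P Q : nat -> Prop} : U P -> (forall i, P i -> Q i) -> U Q.
Proof. by case: HU => _ H _ _ _; apply: H. Qed.
Lemma U_and {P Q : nat -> Prop} : U P -> U Q -> U (fun i => P i /\ Q i).
Proof. by case: HU => _ _ H _ _; apply: H. Qed.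
Lemma U_not {P : nat -> Prop} : ~ U P -> U (fun i => ~ P i).
Proof. by case: HU => _ _ _ H _ nP; case: (H P). Qed.
Lemma U_True : U (fun _ => True).
Proof. by case: HU => [[]]. Qed.
Lemma U_ex {P : nat -> Prop} : U P -> exists i, P i.
Proof.
move=> HP; apply: Classical_Prop.NNPP => nE.
case: HU => [[_ HF]] _ _ _ _; apply: HF; apply: (U_mono HP) => i Pi; apply: nE; by exists i.
Qed.
Lemma U_bound f : nonstandard U f -> forall b, U (fun i => b <= f i).
Proof.
move=> Hf; elim=> [|b IH]; first by apply: (U_mono U_True).
apply: (U_mono (U_and IH (U_not (Hf b)))) => i [H1 H2].
by rewrite ltn_neqAle H1 andbT; apply/eqP => E; apply: H2.
Qed.
Lemma U_above f (s : {fset nat}) : nonstandard U f -> U (fun i => forall j, j \in s -> j < f i).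
Proof.
move=> Hf; have [b Hb] := fset_bound s.
apply: (U_mono (U_bound _ Hf b)) => i H j /Hb Hj; exact: leq_trans Hj H.
Qed.
End UF.
Arguments U_mono {U} HU {P Q}.
Arguments U_and {U} HU {P Q}.
Arguments U_not {U} HU {P}.
Arguments U_True {U} HU.
Arguments U_ex {U} HU {P}.
Arguments U_above {U} HU {f} s.

Fixpoint G (U : (nat -> Prop) -> Prop) (alpha : {fset nat} -> nat -> nat)
  (A : {fset nat} -> Prop) (k : nat) (t : {fset nat}) : Prop :=
  match k with
  | 0 => A t
  | k'.+1 => U (fun i => G U alpha A k' (t `|` [fset alpha t i]))
  end.

Theorem mainTheorem14 (U : (nat -> Prop) -> Prop)
  (alpha : {fset nat} -> nat -> nat) (n : nat)
  (A : {fset nat} -> Prop) (T : {fset nat} -> Prop) :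
  nonprincipal_ultrafilter U ->
  (forall s, nonstandard U (alpha s)) ->
  (forall s, A s -> #|` s| = n) ->
  alpha_tree U alpha T ->
  exists S : {fset nat} -> Prop,
    [/\ alpha_tree U alpha S,
        (forall s, S s -> T s),
        (exists r, is_stem T r /\ is_stem S r) &
        (forall s, S s -> #|` s| = n -> A s) \/
        (forall s, S s -> #|` s| = n -> ~ A s)].
Proof.
move=> HU Hns HA [HT [r [Hst [t0 [Tt0 rt0]] Hch]]].
have [HTr HcompT _] := Hst.
pose good t := G U alpha A (n - #|` t|) t.
pose S t := T t /\ forall p, init_seg p t -> init_seg r p -> #|` p| <= n -> (good p <-> good r).
have antisym : forall p q, init_seg p q -> init_seg q p -> p = q.
  move=> p q H1 H2; apply: sub_card_eq; first exact: init_seg_sub.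
  exact: fsubset_leq_card (init_seg_sub H2).
have Sr : S r.
  split=> // p H1 H2; by rewrite (antisym _ _ H1 H2).
have child : forall s, S s -> init_seg r s -> U (fun i => S (s `|` [fset alpha s i])).
  move=> s [Ts Hs] rs.
  have H1 := Hch s Ts rs.
  have H2 := U_above HU s (Hns s).
  have H3 : U (fun i => #|` s| < n -> (good (s `|` [fset alpha s i]) <-> good s)).
    case: (ltnP #|` s| n) => [lt|ge]; last first.
      by apply: (U_mono HU (U_True HU)) => i _; by [].
    have E : n - #|` s| = (n - (#|` s|).+1).+1 by rewrite subnSK.
    have Ec : forall i, (forall j, j \in s -> j < alpha s i) ->
       good (s `|` [fset alpha s i]) = G U alpha A (n - (#|` s|).+1) (s `|` [fset alpha s i]).
      move=> i Hi; rewrite /good card_child //; apply/negP => /Hi; by rewrite ltnn.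
    case: (classic (good s)) => Hg.
      have Hg' : U (fun i => G U alpha A (n - (#|` s|).+1) (s `|` [fset alpha s i])).
        by move: Hg; rewrite /good E.
      apply: (U_mono HU (U_and HU Hg' H2)) => i [Hi1 Hi2] _; rewrite Ec //; tauto.
    have Hg' : ~ U (fun i => G U alpha A (n - (#|` s|).+1) (s `|` [fset alpha s i])).
      by move: Hg; rewrite /good E.
    apply: (U_mono HU (U_and HU (U_not HU Hg') H2)) => i [Hi1 Hi2] _; rewrite Ec //; tauto.
  apply: (U_mono HU (U_and HU H1 (U_and HU H2 H3))) => i [Tc [Hab H]].
  split=> // p Hp rp pn.
  case: (init_seg_child Hab Hp) => [Ep|ps]; last exact: Hs.
  have ns : alpha s i \notin s by apply/negP => /Hab; rewrite ltnn.
  have cn : #|` s| < n by move: pn; rewrite Ep card_child.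
  rewrite Ep (H cn); apply: Hs => //; [exact: init_seg_refl | exact: ltnW].
have stemS : is_stem S r.
  split=> //; first by move=> t [Tt _]; apply: HcompT.
  move=> s' Ss' Hcomp rs'.
  have H1 := child r Sr (init_seg_refl r).
  have H2 := U_above HU s' (Hns r).
  have [i [Sc Hi]] := U_ex HU (U_and HU H1 H2).
  have ns : alpha r i \notin s' by apply/negP => /Hi; rewrite ltnn.
  case: (Hcomp _ Sc) => Hc.
    apply: sub_card_eq; last exact: fsubset_leq_card (init_seg_sub rs').
    apply/fsubsetP => x xs; have := fsubsetP (init_seg_sub Hc) x xs.
    rewrite !inE => /orP [//|/eqP E]; by rewrite -E xs in ns.
  exfalso; have := fsubsetP (init_seg_sub Hc) (alpha r i).
  by rewrite !inE eqxx orbT (negbTE ns) => /(_ isT).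
exists S; split.
- split.
    split; first by exists r.
    move=> s t [Tt Ht] st; split; first exact: HT.2 Tt st.
    move=> p ps rp pn; apply: Ht => //; exact: init_seg_trans ps st.
  exists r; split=> //; first by exists r; split=> //; exact: init_seg_refl.
- by move=> s [].
- by exists r.
case: (leqP #|` r| n) => [le|gt].
  have rs : forall s, S s -> #|` s| = n -> init_seg r s.
    move=> s [Ts _] sn; case: (HcompT s Ts) => // sr.
    have -> : s = r by apply: sub_card_eq; [exact: init_seg_sub | rewrite sn].
    exact: init_seg_refl.
  have gA : forall s, S s -> #|` s| = n -> (A s <-> good r).
    move=> s Ss sn; have [_ Hs] := Ss.
    have <- := Hs s (init_seg_refl s) (rs s Ss sn); last by rewrite sn.
    by rewrite /good sn subnn.
  case: (classic (good r)) => Hg; [left|right] => s Ss sn; have := gA s Ss sn; tauto.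
have sr : forall s, S s -> #|` s| = n -> init_seg s r.
  move=> s [Ts _] sn; case: (HcompT s Ts) => // rs.
  by have := fsubset_leq_card (init_seg_sub rs); rewrite sn leqNgt gt.
case: (classic (exists s0, [/\ S s0, #|` s0| = n & A s0])) => [[s0 [S0 n0 A0]]|nE].
  left=> s Ss sn; suff -> : s = s0 by [].
  apply: (init_seg_chain (sr s Ss sn) (sr s0 S0 n0)); by rewrite sn n0.
right=> s Ss sn As; apply: nE; by exists s.
Qed.
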